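(* For every $n\in\mathbb{N}$ and every formula $\varphi$ of $\mathbf{CPN}_n$: if $\models_{(n)}\varphi$ then $\vdash_{(n)}\varphi$.
   Context: Fix $n\in\mathbb{N}$, $n\ge 1$, and write $[n]=\{1,\dots,n\}$. Chains: a chain over $[n]$ is a finite sequence of distinct elements of $[n]$; chains with the same length and the same symbols are identified, so a chain is effectively a subset of $[n]$. $c_k$ denotes a chain with $k$ symbols, $\epsilon$ the empty chain, and $(n)$ the chain consisting of all symbols of $[n]$. For chains $c,d$: the concatenation $c\cdot d$ is the chain of symbols occurring in $c$ or in $d$; the coconcatenation $c\otimes d$ is the chain of symbols occurring in exactly one of $c,d$; $d$ is a subchain of $c$ if every symbol of $d$ is a symbol of $c$. The complementary chain $c'_{n-k}$ of $c_k$ is the chain of the symbols of $[n]$ not occurring in $c_k$. Language of $\mathbf{CPN}_n$: a countable set $P_n$ of propositional letters; constants $\perp_c$ for each chain $c$ over $[n]$ with $1\le |c|\le n-1$, and constants $\perp_{(n)}$ (contradiction) and $\top_{(n)}$ (truth); a unary connective $\neg_c$ for each nonempty chain $c$ over $[n]$ ($\neg_{(n)}$ is the strong negation; the $\neg_c$ with $|c|\le n-1$ are weak negations); a binary connective $\to_{(n)}$. Formulas: propositional letters and constants are formulas; if $\varphi,\psi$ are formulas then so are $\neg_c\varphi$ and $(\varphi\to_{(n)}\psi)$. Conventions: $\neg_\epsilon\varphi:=\varphi$, $\perp_\epsilon:=\top_{(n)}$, and $\perp_c$ for $c=(n)$ means $\perp_{(n)}$. Abbreviations: $\varphi\wedge_{(n)}\psi:=\neg_{(n)}(\varphi\to_{(n)}\neg_{(n)}\psi)$,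 $\varphi\vee_{(n)}\psi:=\neg_{(n)}\varphi\to_{(n)}\psi$, $\varphi\leftrightarrow_{(n)}\psi:=(\varphi\to_{(n)}\psi)\wedge_{(n)}(\psi\to_{(n)}\varphi)$. Axioms of $\mathbf{CPN}_n$, for all formulas $\varphi,\psi,\chi$ and all nonempty chains $c_k,c_r$ over $[n]$: (A1) $\varphi\to_{(n)}(\psi\to_{(n)}\varphi)$; (A2) $(\varphi\to_{(n)}(\psi\to_{(n)}\chi))\to_{(n)}((\varphi\to_{(n)}\psi)\to_{(n)}(\varphi\to_{(n)}\chi))$; (A3) $(\neg_{(n)}\psi\to_{(n)}\neg_{(n)}\varphi)\to_{(n)}((\neg_{(n)}\psi\to_{(n)}\varphi)\to_{(n)}\psi)$; (A4) $\varphi\to_{(n)}(\perp_{c_k}\to_{(n)}\neg_{c_k}\varphi)$; (A5) $\neg_{c_k}\neg_{c_r}\varphi\leftrightarrow_{(n)}\neg_{c_k\otimes c_r}\varphi$; (A6) $\neg_{c_k}\perp_{c_r}\leftrightarrow_{(n)}\perp_{c_k\otimes c_r}$; (A7) $\perp_{c_k}\to_{(n)}\perp_{c_r}$, whenever $c_r$ is a subchain of $c_k$. The only rule of inference is modus ponens (from $\varphi$ and $\varphi\to_{(n)}\psi$ infer $\psi$). For a set $\Sigma$ of formulas, $\Sigma\vdash_{(n)}\varphi$ means there is a finite sequence of formulas ending with $\varphi$, each of which is an axiom, a member of $\Sigma$, or obtained from two earlier members by modus ponens; $\vdash_{(n)}\varphi$ means $\emptyset\vdash_{(n)}\varphi$.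 Semantics: for each $i\in[n]$ there is a world $\mathcal M_i=\{T_i,F_i\}$ (pairwise disjoint sets). A valuation $\mathcal V$ assigns to each propositional letter $p$ and each $i\in[n]$ a value $v_i(p)\in\mathcal M_i$ (independently for different $i$). It extends to all formulas, for each $i$, by: $\bar v_i(p)=v_i(p)$ for letters; $\bar v_i(\perp_c)=F_i$ if $i$ is a symbol of $c$ and $T_i$ otherwise (so $\bar v_i(\perp_{(n)})=F_i$ and $\bar v_i(\top_{(n)})=T_i$); $\bar v_i(\neg_c\varphi)=\bar v_i(\varphi)$ if $i$ is not a symbol of $c$, and the opposite value ($T_i\leftrightarrow F_i$) if $i$ is a symbol of $c$; $\bar v_i(\varphi\to_{(n)}\psi)=F_i$ iff $\bar v_i(\varphi)=T_i$ and $\bar v_i(\psi)=F_i$, otherwise $T_i$ (hence $\wedge_{(n)},\vee_{(n)}$ behave classically in each world). Write $\bar{\mathcal V}(\varphi)=(\bar v_1(\varphi),\dots,\bar v_n(\varphi))$. A formula $\varphi$ is a tautology, written $\models_{(n)}\varphi$, iff $\bar{\mathcal V}(\varphi)=(T_1,\dots,T_n)$ for every valuation $\mathcal V$. *)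

(* Defs.v *)
From mathcomp Require Import all_boot.

Set Implicit Arguments.
Unset Strict Implicit.
Unset Printing Implicit Defensive.

Section CPN.
Variable n : nat.

(* A chain over [n] is identified with its set of symbols; symbols 1..n are
   represented by 'I_n (0..n-1). *)
Definition chain := {set 'I_n}.

Definition nzchain := {c : chain | c != set0}.

(* Formulas.  [Bot c] is the constant ⊥_c; by the paper's conventions
   ⊥_ε = ⊤_(n) and ⊥_(n) (c = full chain) is the contradiction, so the
   constants are exactly the Bot c for c ranging over all chains. *)
Inductive form : Type :=
| Var of nat
| Bot of chain
| Neg of nzchain & form
| Imp of form & form.

Definition cocat (c d : chain) : chain := (c :\: d) :|: (d :\: c).

(* ¬_c φ for an arbitrary chain c, with the convention ¬_ε φ := φ *)
Definition neg (c : chain) (phi : form) : form :=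
  match insub c with Some c' => Neg c' phi | None => phi end.

Definition negN (phi : form) : form := neg setT phi.
Definition andN (phi psi : form) : form := negN (Imp phi (negN psi)).
Definition iffN (phi psi : form) : form := andN (Imp phi psi) (Imp psi phi).

Inductive axiom : form -> Prop :=
| A1 phi psi : axiom (Imp phi (Imp psi phi))
| A2 phi psi chi :
    axiom (Imp (Imp phi (Imp psi chi)) (Imp (Imp phi psi) (Imp phi chi)))
| A3 phi psi :
    axiom (Imp (Imp (negN psi) (negN phi)) (Imp (Imp (negN psi) phi) psi))
| A4 phi (ck : nzchain) : axiom (Imp phi (Imp (Bot (val ck)) (Neg ck phi)))
| A5 phi (ck cr : nzchain) :
    axiom (iffN (Neg ck (Neg cr phi)) (neg (cocat (val ck) (val cr)) phi))
| A6 (ck cr : nzchain) :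
    axiom (iffN (Neg ck (Bot (val cr))) (Bot (cocat (val ck) (val cr))))
| A7 (ck cr : nzchain) :
    val cr \subset val ck -> axiom (Imp (Bot (val ck)) (Bot (val cr))).

Inductive derivable (Sigma : form -> Prop) : form -> Prop :=
| d_ax phi : axiom phi -> derivable Sigma phi
| d_hyp phi : Sigma phi -> derivable Sigma phi
| d_mp phi psi : derivable Sigma phi -> derivable Sigma (Imp phi psi) ->
                 derivable Sigma psi.

Definition provable (phi : form) : Prop := derivable (fun _ => False) phi.

(* Semantics: in world i, T_i is [true] and F_i is [false]. A valuation
   assigns to each letter and each world a truth value. *)
Definition valuation := nat -> 'I_n -> bool.

Fixpoint eval (v : valuation) (i : 'I_n) (phi : form) : bool :=
  match phi with
  | Var p => v p i
  | Bot c => i \notin c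
  | Neg c psi => (i \in val c) (+) eval v i psi
  | Imp psi chi => eval v i psi ==> eval v i chi
  end.

Definition tautology (phi : form) : Prop :=
  forall (v : valuation) (i : 'I_n), eval v i phi = true.

End CPN.

(* Main.v *)
Require Import Defs.
From mathcomp Require Import all_boot.
Set Implicit Arguments. Unset Strict Implicit. Unset Printing Implicit Defensive.

Definition ext {n} (S : form n -> Prop) (a : form n) : form n -> Prop :=
  fun x => S x \/ x = a.

Lemma ax {n} {S : form n -> Prop} phi : axiom phi -> derivable S phi.
Proof. exact: d_ax. Qed.

Lemma mp {n} {S : form n -> Prop} {a b} :
  derivable S (Imp a b) -> derivable S a -> derivable S b.
Proof. by move=> h1 h2; apply: d_mp h2 h1. Qed.

Lemma mono {n} (S S' : form n -> Prop) phi :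
  (forall x, S x -> S' x) -> derivable S phi -> derivable S' phi.
Proof.
move=> H; elim=> [x Hx|x Hx|x y _ h1 _ h2]; first exact: d_ax.
  by apply: d_hyp; apply: H.
exact: d_mp h1 h2.
Qed.

Lemma hyp {n} (S : form n -> Prop) a : derivable (ext S a) a.
Proof. by apply: d_hyp; right. Qed.

Lemma weak {n} (S : form n -> Prop) a phi :
  derivable S phi -> derivable (ext S a) phi.
Proof. apply: mono => x; by left. Qed.

Lemma idI {n} {S : form n -> Prop} {a} : derivable S (Imp a a).
Proof.
apply: (mp _ (ax (A1 a a))).
apply: (mp _ (ax (A1 a (Imp a a)))).
exact: ax (A2 a (Imp a a) a).
Qed.

Lemma DT {n} (S : form n -> Prop) a b :
  derivable (ext S a) b -> derivable S (Imp a b).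
Proof.
elim=> [x Hx|x [Hx|->]|x y _ h1 _ h2].
- apply: (mp (ax (A1 x a))); exact: ax Hx.
- apply: (mp (ax (A1 x a))); exact: d_hyp.
- exact: idI.
- apply: (mp _ h1); apply: (mp _ h2); exact: ax (A2 _ _ _).
Qed.

Lemma DTinv {n} (S : form n -> Prop) a b :
  derivable S (Imp a b) -> derivable (ext S a) b.
Proof. move=> h; apply: (mp (weak _ h) (hyp _ _)). Qed.

Notation "¬ x" := (negN x) (at level 35).

Lemma dn_elim {n} {S : form n -> Prop} {b} : derivable S (Imp (¬ ¬ b) b).
Proof.
apply: DT.
have h1 : derivable (ext S (¬ ¬ b)) (Imp (¬ b) (¬ ¬ b)).
  apply: (mp (ax (A1 _ _))); exact: hyp.
apply: (mp _ idI); apply: (mp _ h1); exact: ax (A3 _ _).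
Qed.

Lemma dn_intro {n} {S : form n -> Prop} {b} : derivable S (Imp b (¬ ¬ b)).
Proof.
apply: DT.
have h1 : derivable (ext S b) (Imp (¬ ¬ ¬ b) b).
  apply: (mp (ax (A1 _ _))); exact: hyp.
apply: (mp _ h1); apply: (mp _ dn_elim); exact: ax (A3 _ _).
Qed.

Lemma efq {n} {S : form n -> Prop} {a b} :
  derivable S (¬ a) -> derivable S a -> derivable S b.
Proof.
move=> h1 h2.
apply: (mp _ (mp (ax (A1 _ (¬ b))) h2)).
apply: (mp _ (mp (ax (A1 _ (¬ b))) h1)).
exact: ax (A3 _ _).
Qed.

Lemma contra1 {n} {S : form n -> Prop} {a b} :
  derivable S (Imp (¬ b) (¬ a)) -> derivable S (Imp a b).
Proof.
move=> h; apply: DT.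
apply: (mp _ (mp (ax (A1 _ (¬ b))) (hyp _ _))).
apply: (mp _ (weak _ h)); exact: ax (A3 _ _).
Qed.

Lemma chainI {n} {S : form n -> Prop} {a b c} :
  derivable S (Imp a b) -> derivable S (Imp b c) -> derivable S (Imp a c).
Proof.
move=> h1 h2; apply: DT; apply: (mp (weak _ h2)); apply: (mp (weak _ h1)); exact: hyp.
Qed.

Lemma contra2 {n} {S : form n -> Prop} {a b} :
  derivable S (Imp a b) -> derivable S (Imp (¬ b) (¬ a)).
Proof.
move=> h; apply: contra1.
exact: chainI (chainI dn_elim h) dn_intro.
Qed.

Lemma cases {n} {S : form n -> Prop} {a b} :
  derivable S (Imp a b) -> derivable S (Imp (¬ a) b) -> derivable S b.
Proof.
move=> h1 h2.
apply: (mp _ (contra2 h1)).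
apply: (mp _ (contra2 h2)).
exact: ax (A3 _ _).
Qed.

Lemma cases_h {n} (S : form n -> Prop) a b :
  derivable (ext S a) b -> derivable (ext S (¬ a)) b -> derivable S b.
Proof. by move=> h1 h2; apply: (cases (a:=a)); apply: DT. Qed.

Lemma imp_false {n} {S : form n -> Prop} {a b} :
  derivable S a -> derivable S (¬ b) -> derivable S (¬ (Imp a b)).
Proof.
move=> h1 h2; apply: (mp _ h2); apply: contra2; apply: DT.
apply: (mp (hyp _ _)); exact: weak.
Qed.

Lemma imp_true {n} {S : form n -> Prop} {a b} :
  derivable S b -> derivable S (Imp a b).
Proof. move=> h; exact: mp (ax (A1 _ _)) h. Qed.

Lemma imp_vac {n} {S : form n -> Prop} {a b} :
  derivable S (¬ a) -> derivable S (Imp a b).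
Proof. move=> h; apply: DT; apply: efq (weak _ h) (hyp _ _). Qed.

Lemma and_l {n} {S : form n -> Prop} {a b} :
  derivable S (andN a b) -> derivable S a.
Proof.
move=> h; apply: (mp dn_elim); apply: (mp _ h); apply: contra2.
apply: DT; apply: imp_vac; exact: hyp.
Qed.

Lemma and_r {n} {S : form n -> Prop} {a b} :
  derivable S (andN a b) -> derivable S b.
Proof.
move=> h; apply: (mp dn_elim); apply: (mp _ h); apply: contra2.
exact: ax (A1 _ _).
Qed.

Lemma iff_l {n} {S : form n -> Prop} {a b} :
  derivable S (iffN a b) -> derivable S (Imp a b).
Proof. exact: and_l. Qed.
Lemma iff_r {n} {S : form n -> Prop} {a b} :
  derivable S (iffN a b) -> derivable S (Imp b a).
Proof. exact: and_r. Qed.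

Lemma negE {n} (c : nzchain n) (phi : form n) : neg (val c) phi = Neg c phi.
Proof. by rewrite /neg valK. Qed.

Lemma neg0 {n} (phi : form n) : neg set0 phi = phi.
Proof. rewrite /neg. case: insubP => //= u. by rewrite eqxx. Qed.

Lemma cocat0l {n} (d : chain n) : cocat set0 d = d.
Proof. by apply/setP => x; rewrite !inE; case: (x \in d). Qed.
Lemma cocat0r {n} (d : chain n) : cocat d set0 = d.
Proof. by apply/setP => x; rewrite !inE; case: (x \in d). Qed.
Lemma cocatTl {n} (d : chain n) : cocat setT d = ~: d.
Proof. by apply/setP => x; rewrite !inE; case: (x \in d). Qed.
Lemma cocatC {n} (c d : chain n) : cocat c d = cocat d c.
Proof. by apply/setP => x; rewrite !inE; case: (x \in d); case: (x \in c). Qed.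
Lemma cocatxx {n} (c : chain n) : cocat c c = set0.
Proof. by apply/setP => x; rewrite !inE; case: (x \in c). Qed.
Lemma cocatU {n} (c d : chain n) : c :&: d = set0 -> cocat c d = c :|: d.
Proof.
move/setP => H; apply/setP => x; move: (H x); rewrite !inE.
by case: (x \in d); case: (x \in c).
Qed.

Lemma ax4 {n} {S : form n -> Prop} c phi :
  derivable S (Imp phi (Imp (Bot c) (neg c phi))).
Proof.
case: (eqVneq c set0) => [->|h]; first by rewrite neg0; exact: ax (A1 _ _).
have := ax (S:=S) (A4 phi (exist _ c h)); by rewrite -negE.
Qed.

Lemma ax5 {n} {S : form n -> Prop} c d phi :
  derivable S (Imp (neg c (neg d phi)) (neg (cocat c d) phi)) /\
  derivable S (Imp (neg (cocat c d) phi) (neg c (neg d phi))).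
Proof.
case: (eqVneq c set0) => [->|hc]; first by rewrite cocat0l neg0; split; exact: idI.
case: (eqVneq d set0) => [->|hd]; first by rewrite cocat0r neg0; split; exact: idI.
have := ax (S:=S) (A5 phi (exist _ c hc) (exist _ d hd)).
rewrite -(negE (exist _ d hd)) -(negE (exist _ c hc)) /= => h.
split; [exact: iff_l h | exact: iff_r h].
Qed.

Lemma ax5a {n} {S : form n -> Prop} c d phi :
  derivable S (neg c (neg d phi)) -> derivable S (neg (cocat c d) phi).
Proof. by move=> h; apply: (mp (proj1 (ax5 c d phi)) h). Qed.
Lemma ax5b {n} {S : form n -> Prop} c d phi :
  derivable S (neg (cocat c d) phi) -> derivable S (neg c (neg d phi)).
Proof. by move=> h; apply: (mp (proj2 (ax5 c d phi)) h). Qed.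

Lemma ax6 {n} {S : form n -> Prop} c d : c != set0 -> d != set0 ->
  derivable S (Imp (neg c (Bot d)) (Bot (cocat c d))) /\
  derivable S (Imp (Bot (cocat c d)) (neg c (Bot d))).
Proof.
move=> hc hd.
have := ax (S:=S) (A6 (exist _ c hc) (exist _ d hd)).
rewrite -(negE (exist _ c hc)) /= => h.
split; [exact: iff_l h | exact: iff_r h].
Qed.

Lemma ax7 {n} {S : form n -> Prop} (c d : chain n) : d != set0 -> d \subset c ->
  derivable S (Imp (Bot c) (Bot d)).
Proof.
move=> hd sub.
have hc : c != set0.
  apply/set0Pn; case/set0Pn: hd => x hx; exists x; exact: (subsetP sub).
exact: ax (@A7 _ (exist _ c hc) (exist _ d hd) sub).
Qed.

Lemma setT_nz {n} : (0 < n)%N -> (setT : chain n) != set0.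
Proof. move=> hn; apply/set0Pn; exists (Ordinal hn); by rewrite inE. Qed.

Lemma notBotT {n} {S : form n -> Prop} : (0 < n)%N -> derivable S (¬ Bot setT).
Proof.
move=> hn; apply: (cases (a := Bot setT)); last exact: idI.
apply: DT; apply: (mp (mp (ax4 setT (Bot setT)) (hyp _ _))); exact: hyp.
Qed.

Lemma Bot0 {n} {S : form n -> Prop} : (0 < n)%N -> derivable S (Bot set0).
Proof.
move=> hn; have := proj1 (ax6 (S:=S) (setT_nz hn) (setT_nz hn)).
rewrite cocatxx => h; exact: (mp h (notBotT hn)).
Qed.

Definition delta {n} (i : 'I_n) : form n := Bot (~: [set i]).

Lemma F1 {n} {S : form n -> Prop} (hn : (0 < n)%N) i (c : chain n) :
  derivable S (delta i) -> i \notin c -> derivable S (Bot c).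
Proof.
move=> hd ic; case: (eqVneq c set0) => [->|h]; first exact: Bot0.
apply: (mp _ hd); apply: ax7 h _.
apply/subsetP => x xc; rewrite !inE; apply: contraNneq ic => <-; exact: xc.
Qed.

Lemma F2 {n} {S : form n -> Prop} (hn : (0 < n)%N) i (c : chain n) :
  derivable S (delta i) -> i \in c -> derivable S (¬ Bot c).
Proof.
move=> hd ic.
have h1 : derivable S (¬ Bot [set i]).
  have hi : [set i] != set0 by apply/set0Pn; exists i; rewrite inE.
  have := proj2 (ax6 (S:=S) (setT_nz hn) hi); rewrite cocatTl => h.
  exact: (mp h hd).
apply: (mp _ h1); apply: contra2; apply: ax7.
  by apply/set0Pn; exists i; rewrite inE.
by rewrite sub1set.
Qed.

Lemma NegW {n} {S : form n -> Prop} (hn : (0 < n)%N) i (d : chain n) psi :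
  derivable S (delta i) -> i \notin d ->
  (derivable S psi -> derivable S (neg d psi)) /\
  (derivable S (¬ psi) -> derivable S (¬ (neg d psi))).
Proof.
move=> hd id; have hb := F1 hn hd id; split=> h.
  exact: (mp (mp (ax4 d psi) h) hb).
have h2 := mp (mp (ax4 d (¬ psi)) h) hb.
have h3 := ax5a h2; rewrite cocatC in h3.
exact: (ax5b h3).
Qed.

Definition sgn {n} (b : bool) (phi : form n) : form n := if b then phi else ¬ phi.

Fixpoint maxv {n} (phi : form n) : nat :=
  match phi with
  | Var p => p.+1
  | Bot _ => 0
  | Neg _ psi => maxv psi
  | Imp a b => maxn (maxv a) (maxv b)
  end.

Lemma kalmar {n} (hn : (0 < n)%N) (S : form n -> Prop) (v : valuation n) i N (phi : form n) :
  derivable S (delta i) ->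
  (forall p, (p < N)%N -> derivable S (sgn (v p i) (Var n p))) ->
  (maxv phi <= N)%N -> derivable S (sgn (eval v i phi) phi).
Proof.
move=> hd hl; elim: phi.
- move=> p /= hp; exact: hl.
- move=> c _ /=; case ic: (i \in c) => /=; first exact: (F2 hn hd ic).
  by apply: (F1 hn hd); rewrite ic.
- move=> c psi IH /= hm; have {}IH := IH hm.
  rewrite -negE; case ic: (i \in val c) => /=.
  + have id : i \notin ~: val c by rewrite inE ic.
    have [W1 W2] := (@NegW _ S hn _ _ psi hd id).
    case: (eval v i psi) IH => /= h.
    * apply: ax5b; rewrite cocatTl; exact: W1.
    * have := ax5a (W2 h); by rewrite cocatTl setCK.
  + have id : i \notin val c by rewrite ic.
    have [W1 W2] := (@NegW _ S hn _ _ psi hd id).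
    by case: (eval v i psi) IH => /= h; [exact: W1 | exact: W2].
- move=> a IHa b IHb /=; rewrite geq_max => /andP [ha hb].
  have {}IHa := IHa ha; have {}IHb := IHb hb.
  case: (eval v i a) IHa => /= h1.
    case: (eval v i b) IHb => /= h2; first exact: imp_true.
    exact: imp_false.
  exact: imp_vac.
Qed.

Definition Gam {n} (k : nat) (v : valuation n) (i : 'I_n) : form n -> Prop :=
  fun x => x = delta i \/ exists2 p, (p < k)%N & x = sgn (v p i) (Var n p).

Lemma elim_step {n} (phi : form n) i k :
  (forall v, derivable (Gam k.+1 v i) phi) -> forall v, derivable (Gam k v i) phi.
Proof.
move=> H v.
pose vb (b : bool) : valuation n := fun p j => if p == k then b else v p j.
apply: (cases_h (a := Var n k)).
- apply: mono (H (vb true)) => x [->|[p hp ->]]; first by left; left.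
  rewrite /vb; case: (eqVneq p k) => [->|pk]; first by right.
  left; right; exists p => //; by rewrite ltnS leq_eqVlt (negbTE pk) in hp.
- apply: mono (H (vb false)) => x [->|[p hp ->]]; first by left; left.
  rewrite /vb; case: (eqVneq p k) => [->|pk]; first by right.
  left; right; exists p => //; by rewrite ltnS leq_eqVlt (negbTE pk) in hp.
Qed.

Definition cset {n} (k : nat) : chain n := [set j : 'I_n | (j < k)%N].

Lemma BotU {n} {S : form n -> Prop} (c d : chain n) :
  derivable S (Bot c) -> derivable S (Bot d) -> c :&: d = set0 ->
  derivable S (Bot (c :|: d)).
Proof.
move=> hc hd cd.
case: (eqVneq c set0) => [->|c0]; first by rewrite set0U.
case: (eqVneq d set0) => [->|d0]; first by rewrite setU0.
have h := mp (mp (ax4 c (Bot d)) hd) hc.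
have := mp (proj1 (ax6 c0 d0)) h; by rewrite cocatU.
Qed.

Theorem mainTheorem15 (n : nat) (hn : (0 < n)%N) (phi : form n) :
  tautology phi -> provable phi.
Proof.
move=> taut.
pose N := maxv phi.
have step1 : forall v i, derivable (Gam N v i) phi.
  move=> v i; have := @kalmar n hn (Gam N v i) v i N phi.
  rewrite taut /=; apply.
  - by apply: d_hyp; left.
  - by move=> p hp; apply: d_hyp; right; exists p.
  - exact: leqnn.
have step3 : forall m k, (k + m = N)%N -> forall v i, derivable (Gam k v i) phi.
  elim=> [|m IH] k hk v i; first by rewrite addn0 in hk; rewrite hk.
  apply: elim_step => w; apply: IH; by rewrite addSnnS.
have hw : forall i, provable (Imp (delta i) phi).
  move=> i; apply: DT; apply: mono (step3 N 0 (add0n N) (fun _ _ => true) i).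
  by move=> x [->|[p]]; [right|].
pose T := ext (fun _ : form n => False) (¬ phi).
have hnd : forall i, derivable T (¬ delta i).
  move=> i; apply: (cases_h (a := delta i)); last exact: hyp.
  apply: (efq (a := phi)); first by apply: weak; apply: hyp.
  apply: (mp _ (hyp _ _)); apply: weak; apply: weak; exact: hw.
have hs : forall i, derivable T (Bot [set i]).
  move=> i; case: (eqVneq (~: [set i]) set0) => [e|ne].
    apply: (efq (a := Bot set0)); last exact: Bot0.
    by have := hnd i; rewrite /delta e.
  have := proj1 (ax6 (S := T) (setT_nz hn) ne); rewrite cocatTl setCK => h.
  exact: (mp h (hnd i)).
have hc : forall k, derivable T (Bot (cset k)).
  elim=> [|k IH].
    have -> : cset 0 = set0 :> chain n by apply/setP => x; rewrite !inE.
    exact: Bot0.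
  case: (ltnP k n) => hk.
    have -> : cset k.+1 = cset k :|: [set Ordinal hk].
      apply/setP => x; rewrite !inE ltnS leq_eqVlt orbC; congr orb.
    apply: BotU IH (hs _) _.
    apply/setP => x; rewrite !inE; apply/andP => -[h1 /eqP h2].
    by rewrite h2 /= ltnn in h1.
  have -> : cset k.+1 = cset k :> chain n.
    apply/setP => x; rewrite !inE; have := ltn_ord x => hx.
    by rewrite (leq_trans hx hk) (leq_trans hx (leqW hk)).
  exact: IH.
have hT : derivable T (Bot setT).
  have -> : (setT : chain n) = cset n.
    by apply/setP => x; rewrite !inE ltn_ord.
  exact: hc.
apply: (cases_h (a := phi)); first exact: hyp.
exact: efq (notBotT hn) hT.
Qed.
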